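(* Let $M$ be an embedded causal generative model, $\ell$ a layer of $M$, and $\mathcal{E}\subseteq\ell$ a subset of nodes such that $\mathcal{E}$ and $\ell\setminus\mathcal{E}$ have no common latent ancestor. Then for any endomorphism $T^{\mathcal{E}}:\bm{\mathcal{V}}^{\mathcal{E}}_M\to\bm{\mathcal{V}}^{\mathcal{E}}_M$, defining $T':\bm{\mathcal{V}}^{\ell\setminus\mathcal{E}}_M\times\bm{\mathcal{V}}^{\mathcal{E}}_M\to\bm{\mathcal{V}}^{\ell\setminus\mathcal{E}}_M\times\bm{\mathcal{V}}^{\mathcal{E}}_M$ by $(\tilde{\bm v},\bm v)\mapsto(\tilde{\bm v},T^{\mathcal{E}}(\bm v))$, the transformation $T:y\mapsto\tilde g^\ell_M\circ T'\circ(\tilde g^\ell_M)^{-1}(y)$ is (intrinsically) disentangled with respect to $\mathcal{E}$ in $M$.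
   Context: A causal generative model (CGM) $M$ consists of $K$ real-valued latent variables $\bm z=(z_k)$ with values in $\mathcal{Z}=\prod_k\mathcal{Z}_k$ (closed intervals), a DAG $\mathcal{G}$, and deterministic continuous structural equations assigning endogenous variables $V_k:=f_k(\mathbf{Pa}_k)$ with values in Euclidean spaces $\mathcal{V}^k$ (parents latent or endogenous) and an output $Y:=f_y(\mathbf{Pa}_y)$ (Euclidean-valued, endogenous parents); the sources of $\mathcal{G}$ are exactly the latent variables and $Y$ is the unique sink. A node $A$ is an ancestor of $B$ if there is a directed path from $A$ to $B$ in $\mathcal{G}$; a latent ancestor is an ancestor that is a latent variable. A layer $\ell$ is a minimal set of endogenous variables meeting every directed path from a latent node to $Y$; for any tuple $\bm v\in\prod_{k\in\ell}\mathcal{V}^k$, $Y(\bm v)$ denotes the output obtained by assigning these values to layer $\ell$ and computing downstream. $\mathcal{Y}_M=\{Y(\bm z):\bm z\in\mathcal{Z}\}$; for a set $\mathcal{F}$ of endogenous variables, $\bm{\mathcal{V}}^{\mathcal{F}}_M$ is the set of value tuples taken by the variables in $\mathcal{F}$ as $\bm z$ ranges over $\mathcal{Z}$; $g_M:\mathcal{Z}\to\mathcal{Y}_M$, $\bm z\mapsto Y(\bm z)$; $\tilde g^\ell_M:\bm{\mathcal{V}}^\ell_M\to\mathcal{Y}_M$, $\bm v\mapsto Y(\bm v)$. An embedding is a continuous injection with continuous inverse on its image; $M$ is embedded if $g_M$ and all $\tilde g^\ell_M$ are embeddings into the output space. An endomorphism of a set $A$ is a continuous map $A\to A$. An endomorphism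 $T:\mathcal{Y}_M\to\mathcal{Y}_M$ is intrinsically disentangled with respect to a subset $\mathcal{E}$ of endogenous variables in layer $\ell$ if there is a transformation $T'$ of the layer-$\ell$ values changing only the components indexed by $\mathcal{E}$ such that, for every $\bm z\in\mathcal{Z}$ with corresponding layer-$\ell$ values $\bm v$, $T(Y(\bm v))=Y(T'(\bm v))$. *)

(* Defs.v *)
From HB Require Import structures.
From mathcomp Require Import all_boot all_order all_algebra.
From mathcomp Require Import all_classical all_reals all_analysis.

Set Implicit Arguments.
Unset Strict Implicit.
Unset Printing Implicit Defensive.

Import Order.TTheory GRing.Theory Num.Theory.
Import numFieldNormedType.Exports.
Local Open Scope classical_set_scope.
Local Open Scope ring_scope.

(** Latent variables are indexed by ['I_K], endogenous variables (other than
  the output) by ['I_N], listed in a topological order of the DAG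
  (an endogenous parent [j] of [k] satisfies [j < k]); the output [Y] is a
  separate node. *)

Record CGM (R : realType) := MkCGM {
  K : nat;
  N : nat;
  dim : 'I_N -> nat;
  dy : nat;
  (* Z_i = [lo i, hi i] (closed intervals) *)
  lo : 'I_K -> R;
  hi : 'I_K -> R;
  lo_le_hi : forall i, lo i <= hi i;
  lpar : 'I_N -> pred 'I_K;
  epar : 'I_N -> pred 'I_N;
  epar_lt : forall k j, epar k j -> (j < k)%N;
  ypar : pred 'I_N;
  feq : forall k : 'I_N,
      'rV[R]_K ->
      prod_topology (fun j : 'I_N => Topological.clone 'rV[R]_(dim j) _) -> 'rV[R]_(dim k);
  fy : prod_topology (fun j : 'I_N => Topological.clone 'rV[R]_(dim j) _) -> 'rV[R]_dy;
  feq_local : forall k (z z' : 'rV[R]_K)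
      (v v' : prod_topology (fun j : 'I_N => Topological.clone 'rV[R]_(dim j) _)),
      (forall i, lpar k i -> z ord0 i = z' ord0 i) ->
      (forall j, epar k j -> v j = v' j) -> feq k z v = feq k z' v';
  fy_local : forall v v' : prod_topology (fun j : 'I_N => Topological.clone 'rV[R]_(dim j) _),
      (forall j, ypar j -> v j = v' j) -> fy v = fy v';
  feq_cont : forall k, continuous (fun p : 'rV[R]_K *
                                        prod_topology (fun j : 'I_N => Topological.clone 'rV[R]_(dim j) _)
                                   => feq k p.1 p.2);
  fy_cont : continuous fy;
  (* the sources of G are exactly the latent variables *)
  endo_not_source : forall k, (exists i, lpar k i) \/ (exists j, epar k j);
  y_not_source : exists j, ypar j;
  (* Y is the unique sink *)
  latent_not_sink : forall i, exists k, lpar k i;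
  endo_not_sink : forall j, ypar j \/ exists k, epar k j
}.

Section CGMDefs.
Variables (R : realType) (M : CGM R).

Definition lats := 'rV[R]_(K M).
Definition vals := prod_topology (fun j : 'I_(N M) => Topological.clone 'rV[R]_(dim j) _).

Definition Zset : set lats := [set z | forall i, lo i <= z ord0 i <= hi i].

Inductive node := Lat of 'I_(K M) | End of 'I_(N M) | Out.

Definition edge (a b : node) : bool :=
  match a, b with
  | Lat i, End k => lpar k i
  | End j, End k => epar k j
  | End j, Out => ypar j
  | _, _ => false
  end.

Definition ancestor (a b : node) : Prop :=
  exists s : seq node, s <> [::] /\ path edge a s /\ last a s = b.

Definition cuts (S : {set 'I_(N M)}) : Prop :=
  forall (i : 'I_(K M)) (s : seq node), path edge (Lat i) s -> last (Lat i) s = Out ->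
    exists k, k \in S /\ has (fun x => if x is End k' then k' == k else false) s.

Definition layer (l : {set 'I_(N M)}) : Prop :=
  cuts l /\ forall S : {set 'I_(N M)}, S \proper l -> ~ cuts S.

Definition no_common_latent_ancestor (A B : {set 'I_(N M)}) : Prop :=
  ~ exists i : 'I_(K M),
      (exists2 k, k \in A & ancestor (Lat i) (End k)) /\
      (exists2 k, k \in B & ancestor (Lat i) (End k)).

(** values of all endogenous variables given the latents, computed along the
    topological order ([N] rounds suffice) *)
Definition state (z : lats) : vals :=
  iter (N M) (fun (v : vals) (k : 'I_(N M)) => feq k z v) (fun k => 0).

Definition state_do (S : {set 'I_(N M)}) (w : vals) (z : lats) : vals :=
  iter (N M) (fun (v : vals) (k : 'I_(N M)) => if k \in S then w k else feq k z v)
       (fun k => 0).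

(** tuples of values indexed by a set [S] of endogenous variables are encoded
    as assignments that vanish outside [S] *)
Definition restrict (S : {set 'I_(N M)}) (v : vals) : vals :=
  fun k => if k \in S then v k else 0.

Definition glue (S : {set 'I_(N M)}) (v w : vals) : vals :=
  fun k => if k \in S then w k else v k.

Definition gM (z : lats) : 'rV[R]_(dy M) := fy (state z).

(** Y(v) for a tuple v of values of the layer l; the latents are irrelevant
    when l is a layer, we use the point lo of Z. *)
Definition Ylay (l : {set 'I_(N M)}) (w : vals) : 'rV[R]_(dy M) :=
  fy (state_do l w (\row_i lo i)).

Definition Yset : set 'rV[R]_(dy M) := gM @` Zset.

Definition Vset (F : {set 'I_(N M)}) : set vals :=
  [set restrict F (state z) | z in Zset].

Definition lay (l : {set 'I_(N M)}) (z : lats) : vals := restrict l (state z).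

End CGMDefs.

Arguments Zset {R} M.
Arguments Yset {R} M.
Arguments vals {R} M.
Arguments lats {R} M.

Definition embedding_on {T U : topologicalType} (A : set T) (f : T -> U) : Prop :=
  [/\ (forall x y, A x -> A y -> f x = f y -> x = y),
      {within A, continuous f} &
      exists g : U -> T, (forall x, A x -> g (f x) = x) /\
                         {within f @` A, continuous g}].

Definition embedded (R : realType) (M : CGM R) : Prop :=
  embedding_on (Zset M) (@gM R M) /\
  forall l : {set 'I_(N M)}, layer l ->
    embedding_on (Vset l) (Ylay l).

Definition endomorphism {T : topologicalType} (A : set T) (f : T -> T) : Prop :=
  (forall x, A x -> A (f x)) /\ {within A, continuous f}.

Definition intrinsically_disentangled (R : realType) (M : CGM R)
    (l E : {set 'I_(N M)}) (T : 'rV[R]_(dy M) -> 'rV[R]_(dy M)) : Prop :=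
  endomorphism (Yset M) T /\
  exists T' : vals M -> vals M,
    (forall w k, k \notin E -> T' w k = w k) /\
    (forall z, Zset M z -> T (Ylay l (lay l z)) = Ylay l (T' (lay l z))).

(** T' : (v~, v) |-> (v~, T^E v) *)
Definition Tprime (R : realType) (M : CGM R) (E : {set 'I_(N M)})
    (TE : vals M -> vals M) (w : vals M) : vals M :=
  glue E w (TE (restrict E w)).

(* Main.v *)
From Pilot Require Import Defs.
From HB Require Import structures.
From mathcomp Require Import all_boot all_order all_algebra.
From mathcomp Require Import all_classical all_reals all_analysis.
From mathcomp Require Import zify.
Import Pilot.Defs.
Set Implicit Arguments.
Unset Strict Implicit.
Unset Printing Implicit Defensive.
Import Order.TTheory GRing.Theory Num.Theory.
Local Open Scope classical_set_scope.
Local Open Scope ring_scope.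

Lemma within_comp {T U W : topologicalType} (A : set T) (B : set U)
  (f : T -> U) (g : U -> W) :
  (forall x, A x -> B (f x)) -> {within A, continuous f} ->
  {within B, continuous g} -> {within A, continuous (g \o f)}.
Proof.
move=> fAB /subspace_continuousP cf /subspace_continuousP cg.
apply/subspace_continuousP => x Ax.
apply: cvg_trans (cg _ (fAB _ Ax)).
move=> P hP; have := cf x Ax _ hP.
rewrite !nbhs_simpl /= => H.
move: H; rewrite /within /=.
apply: filterS => t H1 At; exact: H1 At (fAB _ At).
Qed.

Lemma prod_cvg (I : Type) (Kt : I -> topologicalType)
  (F : set_system (prod_topology Kt)) (f : prod_topology Kt) :
  Filter F -> (forall i, (fun g => g i) @ F --> f i) -> F --> f.
Proof.
move=> FF H; apply/cvg_sup => i A /=.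
case=> B [[C oC <-] Cf sBA].
rewrite nbhs_simpl; apply: filterS sBA _.
apply: (H i C); rewrite /=; exact: open_nbhs_nbhs.
Qed.
Lemma iter_stab (R : realType) (M : CGM R) (G : vals M -> vals M) (x0 : vals M) :
  (forall (v v' : vals M) (k : 'I_(N M)),
      (forall j : 'I_(N M), (j < k)%N -> v j = v' j) -> G v k = G v' k) ->
  forall n m, (n <= m)%N -> forall k : 'I_(N M), (k < n)%N ->
    iter m G x0 k = iter n G x0 k.
Proof.
move=> HG; elim=> [|n IH] [|m] //= nm k kn.
apply: HG => j jk; apply: IH; lia.
Qed.

Lemma iter_fix (R : realType) (M : CGM R) (G : vals M -> vals M) (x0 : vals M) :
  (forall (v v' : vals M) (k : 'I_(N M)),
      (forall j : 'I_(N M), (j < k)%N -> v j = v' j) -> G v k = G v' k) ->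
  forall k, iter (N M) G x0 k = G (iter (N M) G x0) k.
Proof.
move=> HG k; rewrite -[RHS]/(iter (N M).+1 G x0 k).
by rewrite (iter_stab x0 HG (leqnSn _)).
Qed.

Lemma state_fix (R : realType) (M : CGM R) (z : lats M) k :
  state z k = feq k z (state z).
Proof.
apply: (iter_fix (G := fun v k => feq k z v)) => v v' k' H.
apply: feq_local => // j /epar_lt; exact: H.
Qed.

Lemma state_do_fix (R : realType) (M : CGM R) S (w : vals M) (z : lats M) k :
  state_do S w z k = if k \in S then w k else feq k z (state_do S w z).
Proof.
apply: (iter_fix (G := fun v k => if k \in S then w k else feq k z v)) => v v' k' H.
case: ifP => // _; apply: feq_local => // j /epar_lt; exact: H.
Qed.

Lemma anc_step (R : realType) (M : CGM R) (a : node M) (j k : 'I_(N M)) :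
  ancestor a (End j) -> epar k j -> ancestor a (End k).
Proof.
move=> [s [s0 [ps ls]]] e; exists (rcons s (End k)); split.
  by case: s {s0 ps ls}.
by rewrite rcons_path ps ls last_rcons /=.
Qed.

Lemma anc_lat (R : realType) (M : CGM R) (i : 'I_(K M)) (k : 'I_(N M)) :
  lpar k i -> ancestor (Lat i) (End k).
Proof. by move=> e; exists [:: End k]; rewrite /= e. Qed.

Lemma state_agree (R : realType) (M : CGM R) (z z' : lats M) :
  forall k, (forall i, ancestor (Lat i) (End k) -> z ord0 i = z' ord0 i) ->
  state z k = state z' k.
Proof.
suff H : forall n (k : 'I_(N M)), (k < n)%N ->
  (forall i, ancestor (Lat i) (End k) -> z ord0 i = z' ord0 i) ->
  state z k = state z' k by move=> k; apply: (H k.+1).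
elim=> [//|n IH] k kn Hk.
rewrite !state_fix; apply: feq_local.
  by move=> i /anc_lat; exact: Hk.
move=> j e; apply: IH; first by have := epar_lt e; lia.
by move=> i /anc_step /(_ e); exact: Hk.
Qed.

Definition inS (R : realType) (M : CGM R) (S : {set 'I_(N M)}) (x : node M) : bool :=
  if x is End k' then k' \in S else false.

Lemma cut_state (R : realType) (M : CGM R) (l : {set 'I_(N M)}) (z z0 : lats M) :
  forall k, (forall i s, path (@edge R M) (Lat i) s -> last (Lat i) s = End k -> has (inS l) s) ->
  state_do l (restrict l (state z)) z0 k = state z k.
Proof.
suff H : forall n (k : 'I_(N M)), (k < n)%N ->
  (forall i s, path (@edge R M) (Lat i) s -> last (Lat i) s = End k -> has (inS l) s) ->
  state_do l (restrict l (state z)) z0 k = state z k by move=> k; apply: (H k.+1).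
elim=> [//|n IH] k kn Hk.
rewrite state_do_fix [RHS]state_fix /restrict; case: ifP => kl.
  by rewrite kl state_fix.
apply: feq_local.
  move=> i e; have := Hk i [:: End k]; rewrite /= e kl => /(_ isT erefl).
  by [].
move=> j e; apply: IH; first by have := epar_lt e; lia.
move=> i s ps ls; have := Hk i (rcons s (End k)).
rewrite rcons_path ps ls last_rcons /= e has_rcons /= kl => /(_ isT erefl).
by [].
Qed.

Lemma Ylay_lay (R : realType) (M : CGM R) (l : {set 'I_(N M)}) (z : lats M) :
  cuts l -> Ylay l (lay l z) = gM z.
Proof.
move=> cl; rewrite /Ylay /gM; apply: fy_local => j yj.
apply: cut_state => i s ps ls.
have h1 : path (@edge R M) (Lat i) (rcons s (Out M)) by rewrite rcons_path ps ls.
have h2 : last (Lat i) (rcons s (Out M)) = Out M by rewrite last_rcons.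
have [k0 [k0l hs]] := cl i _ h1 h2.
move: hs; rewrite has_rcons /=; apply: sub_has => -[//|k'|//] /= /eqP ->.
exact: k0l.
Qed.

Lemma mix (R : realType) (M : CGM R) (l E : {set 'I_(N M)}) (z z' : lats M) :
  E \subset l -> no_common_latent_ancestor E (l :\: E) ->
  Zset M z -> Zset M z' ->
  exists2 z'', Zset M z'' &
    restrict l (state z'') = glue E (restrict l (state z)) (restrict E (state z')).
Proof.
move=> El nc Zz Zz'.
pose P i := exists2 k, k \in E & ancestor (Lat i) (@End R M k).
exists (\row_i (if `[< P i >] then z' ord0 i else z ord0 i)).
  by move=> i; rewrite mxE; case: ifP => _; [exact: Zz' | exact: Zz].
apply: functional_extensionality_dep => k; rewrite /restrict /glue.
case kE: (k \in E).
  rewrite (fintype.subsetP El _ kE); apply: state_agree => i ai.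
  rewrite mxE; case: asboolP => // nP; exfalso; apply: nP; by exists k.
case: ifP => // kl; apply: state_agree => i ai.
rewrite mxE; case: asboolP => // Pi.
exfalso; apply: nc; exists i; split => //.
by exists k => //; rewrite finset.in_setD kE kl.
Qed.

Lemma prod_within (I : Type) (Kt : I -> topologicalType) (T : topologicalType)
  (A : set T) (h : T -> prod_topology Kt) :
  (forall i, {within A, continuous (fun t => h t i)}) -> {within A, continuous h}.
Proof.
move=> H; apply/subspace_continuousP => x Ax; apply: prod_cvg => i.
by have /subspace_continuousP := H i; apply.
Qed.

Lemma restrict_cont (R : realType) (M : CGM R) (S : {set 'I_(N M)}) (A : set (vals M)) :
  {within A, continuous (restrict S : vals M -> vals M)}.
Proof.
apply: prod_within => k; case kS: (k \in S).
  have -> : (fun t : vals M => restrict S t k) = (fun t : vals M => t k).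
    by apply: funext => t; rewrite /restrict kS.
  apply: continuous_subspaceT => x; exact: (@proj_continuous _ _ k x).
have -> : (fun t : vals M => restrict S t k) = (fun t : vals M => 0).
  by apply: funext => t; rewrite /restrict kS.
apply: continuous_subspaceT => x; rewrite /continuous_at; apply: cvg_cst; exact: (@nbhs_pfilter (vals M) x).
Qed.

Theorem proposition4 (R : realType) (M : CGM R) (l E : {set 'I_(N M)}) :
  embedded M ->
  layer l ->
  E \subset l ->
  no_common_latent_ancestor E (l :\: E) ->
  forall TE : vals M -> vals M,
    endomorphism (Vset E) TE ->
  forall ginv : 'rV[R]_(dy M) -> vals M,
    (forall y, Yset M y -> Vset l (ginv y) /\ Ylay l (ginv y) = y) ->
    intrinsically_disentangled l E
      (fun y => Ylay l (Tprime E TE (ginv y))).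
Proof.
move=> [_ emb] Ll El nc TE [TEmap TEcont] ginv Hginv.
have [Yinj Ycont [g [gK gcont]]] := emb l Ll.
have cl := Ll.1.
have YV : forall w, Vset l w -> Yset M (Ylay l w).
  by move=> _ [z Zz <-]; rewrite -/(lay l z) Ylay_lay //; exists z.
have F2 : forall w, Vset l w -> Vset E (restrict E w).
  move=> _ [z Zz <-]; exists z => //.
  apply: functional_extensionality_dep => k; rewrite /restrict.
  by case: ifP => // kE; rewrite (fintype.subsetP El _ kE).
have F3 : forall w, Vset l w -> Vset l (Tprime E TE w).
  move=> w Vw; have := TEmap _ (F2 _ Vw); case=> z' Zz' e.
  case: Vw => z Zz ew.
  have [z'' Zz'' e''] := mix El nc Zz Zz'.
  exists z'' => //; rewrite e'' /Tprime -e -ew.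
  by [].
have F4 : forall w, Vset l w -> ginv (Ylay l w) = w.
  move=> w Vw; have [V1 Y1] := Hginv _ (YV _ Vw).
  exact: Yinj.
have F5 : forall y, Yset M y -> ginv y = g y.
  move=> y Yy; have [V1 Y1] := Hginv _ Yy.
  by rewrite -{2}Y1 gK.
have imY : Ylay l @` Vset l = Yset M.
  apply/seteqP; split => y.
    by case=> w Vw <-; exact: YV.
  move=> Yy; have [V1 Y1] := Hginv _ Yy; by exists (ginv y).
split; last first.
  exists (Tprime E TE); split.
    by move=> w k kE; rewrite /Tprime /glue (negbTE kE).
  by move=> z Zz; rewrite /= F4 //; exists z.
split.
  by move=> y Yy; apply: YV; apply: F3; exact: (Hginv y Yy).1.
apply: (within_comp _ _ Ycont) => //.
  by move=> y Yy; apply: F3; exact: (Hginv y Yy).1.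
apply: (within_comp (B := Vset l)).
- by move=> y Yy; exact: (Hginv y Yy).1.
- apply: (@subspace_eq_continuous _ _ _ g).
    by move=> y; rewrite inE => Yy; rewrite /from_subspace F5.
  by rewrite -imY.
- apply: prod_within => k; case kE: (k \in E).
    have -> : (fun w => Tprime E TE w k) = (fun v : vals M => v k) \o (TE \o restrict E).
      by apply: funext => w; rewrite /Tprime /glue /= kE.
    apply: (within_comp (B := setT)) => //.
      apply: (within_comp (B := Vset E)) => //.
      exact: restrict_cont.
    apply: continuous_subspaceT => x; exact: (@proj_continuous _ _ k x).
  have -> : (fun w => Tprime E TE w k) = (fun v : vals M => v k).
    by apply: funext => w; rewrite /Tprime /glue /= kE.
  apply: continuous_subspaceT => x; exact: (@proj_continuous _ _ k x).
Qed.
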